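(* The pair $(\mathbf I,\{0,1\})$, where $\{0,1\}$ carries the subspace structure, is an SNDR pair.
   Context: A Frölicher space is a triple $(X,\mathcal C_X,\mathcal F_X)$ with $\mathcal C_X\subseteq X^{\mathbb R}$, $\mathcal F_X\subseteq\mathbb R^X$, such that $\mathcal F_X=\{f\mid f\circ c\in C^\infty(\mathbb R,\mathbb R)\ \forall c\in\mathcal C_X\}$ and $\mathcal C_X=\{c\mid f\circ c\in C^\infty(\mathbb R,\mathbb R)\ \forall f\in\mathcal F_X\}$. A map $\varphi:X\to Y$ is smooth if $g\circ\varphi\in\mathcal F_X$ for all $g\in\mathcal F_Y$. Subspaces carry the initial structure; products the structure generated by $f\circ\pi_i$. $I$ is $[0,1]$ with the subspace structure from $\mathbb R$ ($\mathcal F_I$ its structure functions). $\mathbf I$ is $[0,1]$ with the structure generated by those $f\in\mathcal F_I$ for which some $0<\epsilon<1/4$ has $f$ constant on $[0,\epsilon)$ and on $(1-\epsilon,1]$. FCIP: Let $i:A\to X$ be smooth. For a structure curve $x:\mathbb R\to X$ let $\Lambda(x,i)$ be the set of $s_*\in x^{-1}(i(A))$ that are limits of sequences $s_n\in x^{-1}(X\setminus i(A))$. A structure function $f$ on $\mathbf I\times X$ has the FCIP with respect to $i$ if $f\circ c$ is $C^\infty$ for every map $c=(t,x):\mathbb R\to[0,1]\times X$ such that $x$ is a structure curve of $X$ and, for every $\epsilon>0$, $t$ is $C^\infty$ on every open interval disjoint from $\bigcup_{s_*\in\Lambda(x,i)}[s_*-\epsilon,s_*+\epsilon]$. A map $g:\mathbf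 I\times X\to Y$ has the FCIP w.r.t. $i$ if $h\circ g$ does for every $h\in\mathcal F_Y$. SNDR pair: for a smooth inclusion $i:A\hookrightarrow X$, $(X,A)$ is an SNDR pair if there are a smooth $u:X\to\mathbf I$ with $u^{-1}(0)=i(A)$ and a smooth $H:\mathbf I\times X\to X$ having the FCIP w.r.t. $i$, with $H(0,x)=x$ for all $x$, $H(t,a)=a$ for all $t$ and $a\in i(A)$, and $H(1,x)\in i(A)$ whenever $u(x)<1$. *)

(* Defs.v *)
From Stdlib Require Import Reals.
Open Scope R_scope.

Definition smooth (f : R -> R) : Prop :=
  exists d : nat -> R -> R,
    (forall x, d O x = f x) /\
    (forall n x, derivable_pt_lim (d n) x (d (S n) x)).

(** Open intervals (a,b) with possibly infinite endpoints (None = -oo / +oo). *)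
Definition in_int (a b : option R) (s : R) : Prop :=
  (match a with None => True | Some a' => a' < s end) /\
  (match b with None => True | Some b' => s < b' end).

Definition smooth_on (a b : option R) (f : R -> R) : Prop :=
  exists d : nat -> R -> R,
    forall x, in_int a b x ->
      d O x = f x /\ (forall n, derivable_pt_lim (d n) x (d (S n) x)).

(** A Frölicher space, presented by a generating family of functions:
    curves = {c | f o c smooth for all generators f},
    functions = {f | f o c smooth for all curves c}.
    Every Frölicher space is generated by its structure functions. *)
Record Frol := { car : Type; gen : (car -> R) -> Prop }.

Definition curve (X : Frol) (c : R -> car X) : Prop :=
  forall f, gen X f -> smooth (fun s => f (c s)).

Definition sfun (X : Frol) (f : car X -> R) : Prop :=
  forall c, curve X c -> smooth (fun s => f (c s)).

Definition smooth_map (X Y : Frol) (phi : car X -> car Y) : Prop :=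
  forall g, sfun Y g -> sfun X (fun x => g (phi x)).

Definition Rspace : Frol := {| car := R; gen := smooth |}.

Definition Subspace (X : Frol) (P : car X -> Prop) : Frol :=
  {| car := { x : car X | P x };
     gen := fun g => exists f, sfun X f /\ g = (fun a => f (proj1_sig a)) |}.

Definition Product (X Y : Frol) : Frol :=
  {| car := (car X * car Y)%type;
     gen := fun g =>
       (exists f, sfun X f /\ g = (fun p => f (fst p))) \/
       (exists f, sfun Y f /\ g = (fun p => f (snd p))) |}.

Definition Ispace : Frol := Subspace Rspace (fun x => 0 <= x <= 1).

Definition Ibold : Frol :=
  {| car := car Ispace;
     gen := fun f => sfun Ispace f /\
       exists eps, 0 < eps < 1/4 /\
         (forall x y : car Ispace, proj1_sig x < eps -> proj1_sig y < eps -> f x = f y) /\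
         (forall x y : car Ispace, 1 - eps < proj1_sig x -> 1 - eps < proj1_sig y -> f x = f y) |}.

Definition I0 : car Ibold := exist _ 0 (conj (Rle_refl 0) Rle_0_1).
Definition I1 : car Ibold := exist _ 1 (conj Rle_0_1 (Rle_refl 1)).

Definition Ends : Frol :=
  Subspace Ibold (fun x => proj1_sig x = 0 \/ proj1_sig x = 1).

Definition incl : car Ends -> car Ibold := fun a => proj1_sig a.

Definition Lambda (X A : Frol) (i : car A -> car X) (x : R -> car X) (s : R) : Prop :=
  (exists a, i a = x s) /\
  exists sn : nat -> R, Un_cv sn s /\ forall n, ~ (exists a, i a = x (sn n)).

Definition FCIP_fun (X A : Frol) (i : car A -> car X)
    (f : car (Product Ibold X) -> R) : Prop :=
  forall (t : R -> car Ibold) (x : R -> car X),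
    curve X x ->
    (forall eps, 0 < eps ->
       forall a b : option R,
         (forall s, in_int a b s -> forall s', Lambda X A i x s' -> eps < Rabs (s - s')) ->
         smooth_on a b (fun s => proj1_sig (t s))) ->
    smooth (fun s => f (t s, x s)).

Definition FCIP_map (X A Y : Frol) (i : car A -> car X)
    (g : car (Product Ibold X) -> car Y) : Prop :=
  forall h, sfun Y h -> FCIP_fun X A i (fun p => h (g p)).

Definition SNDR (X A : Frol) (i : car A -> car X) : Prop :=
  smooth_map A X i /\
  exists u : car X -> car Ibold,
    smooth_map X Ibold u /\
    (forall x, proj1_sig (u x) = 0 <-> exists a, i a = x) /\
    exists H : car (Product Ibold X) -> car X,
      smooth_map (Product Ibold X) X H /\
      FCIP_map X A X i H /\
      (forall x, H (I0, x) = x) /\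
      (forall t a, H (t, i a) = i a) /\
      (forall x, proj1_sig (u x) < 1 -> exists a, H (I1, x) = i a).

(* Main.v *)
Require Import Defs.
From Stdlib Require Import Reals.
From Stdlib Require Import Lra Lia Classical ClassicalEpsilon FunctionalExtensionality ProofIrrelevance.
Open Scope R_scope.

Definition openP (U : R -> Prop) := forall x, U x -> exists d, 0 < d /\ forall y, Rabs (y - x) < d -> U y.

Lemma dpl_local f g x l d : 0 < d -> (forall y, Rabs (y-x) < d -> f y = g y) ->
  derivable_pt_lim f x l -> derivable_pt_lim g x l.
Proof. intros Hd Hfg H. apply derivable_pt_lim_locally_ext with f (x-d) (x+d); auto; [lra|].
  intros z Hz; apply Hfg; apply Rabs_def1; lra. Qed.

Fixpoint Cn (U : R -> Prop) (n : nat) (f : R -> R) : Prop :=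
  match n with O => True | S m => exists f', (forall x, U x -> derivable_pt_lim f x (f' x)) /\ Cn U m f' end.

Definition SmU U f := forall n, Cn U n f.
Definition All : R -> Prop := fun _ => True.

Lemma Cn_S U n f : Cn U (S n) f -> Cn U n f.
Proof. revert f; induction n; intros f H; simpl; auto.
  destruct H as [f' [H1 H2]]. exists f'; split; auto. Qed.

Lemma Cn_ext U n f g : openP U -> (forall x, U x -> f x = g x) -> Cn U n f -> Cn U n g.
Proof. intros HU Hfg H. destruct n; simpl; auto. destruct H as [f' [H1 H2]]. exists f'; split; auto.
  intros x Hx. destruct (HU x Hx) as [d [Hd Hd']]. apply dpl_local with f d; auto. Qed.

Lemma Cn_sub U V n f : (forall x, V x -> U x) -> Cn U n f -> Cn V n f.
Proof. revert f; induction n; intros f HVU H; simpl; auto. destruct H as [f' [H1 H2]].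
  exists f'; split; auto. Qed.

Lemma Cn_const U n c : Cn U n (fun _ => c).
Proof. revert c; induction n; intros c; simpl; auto. exists (fun _ => 0); split; auto.
  intros. apply derivable_pt_lim_const. Qed.

Lemma Cn_id U n : Cn U n (fun x => x).
Proof. destruct n; simpl; auto. exists (fun _ => 1); split; [intros; apply derivable_pt_lim_id | apply Cn_const]. Qed.

Lemma Cn_plus U n f g : Cn U n f -> Cn U n g -> Cn U n (fun x => f x + g x).
Proof. revert f g; induction n; intros f g Hf Hg; simpl; auto.
  destruct Hf as [f' [F1 F2]], Hg as [g' [G1 G2]]. exists (fun x => f' x + g' x); split; auto.
  intros x Hx. apply (derivable_pt_lim_plus f g x (f' x) (g' x)); [apply F1|apply G1]; auto. Qed.

Lemma Cn_mult U n f g : Cn U n f -> Cn U n g -> Cn U n (fun x => f x * g x).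
Proof. revert f g; induction n; intros f g Hf Hg; simpl; auto.
  pose proof (Cn_S _ _ _ Hf) as Hf0. pose proof (Cn_S _ _ _ Hg) as Hg0.
  destruct Hf as [f' [F1 F2]], Hg as [g' [G1 G2]].
  exists (fun x => f' x * g x + f x * g' x); split.
  - intros x Hx. apply (derivable_pt_lim_mult f g x (f' x) (g' x)); [apply F1|apply G1]; auto.
  - apply Cn_plus; apply IHn; auto. Qed.

Lemma Cn_scal U n c f : Cn U n f -> Cn U n (fun x => c * f x).
Proof. intros; apply Cn_mult; auto; apply Cn_const. Qed.

Lemma Cn_opp U n f : Cn U n f -> Cn U n (fun x => - f x).
Proof. intros H. replace (fun x => - f x) with (fun x => (-1) * f x).
  - apply Cn_scal; auto.
  - apply functional_extensionality; intros; ring. Qed.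

Lemma openAll : openP All.
Proof. intros x _; exists 1; split; [lra| intros; exact I]. Qed.

Lemma Sm_deriv U f : openP U -> SmU U f -> exists f1, (forall x, U x -> derivable_pt_lim f x (f1 x)) /\ SmU U f1.
Proof. intros HU H. destruct (H 1%nat) as [f1 [H1 _]]. exists f1; split; auto.
  intros k. destruct (H (S k)) as [f2 [H3 H4]]. apply Cn_ext with f2; auto.
  intros x Hx. eapply uniqueness_limite; eauto. Qed.

Lemma Cn_comp U n f g : SmU All f -> Cn U n g -> Cn U n (fun x => f (g x)).
Proof. revert f g; induction n; intros f g Hf Hg; simpl; auto.
  destruct (Sm_deriv _ _ openAll Hf) as [f1 [F1 F2]].
  pose proof (Cn_S _ _ _ Hg) as Hg0.
  destruct Hg as [g' [G1 G2]].
  exists (fun x => f1 (g x) * g' x); split.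
  - intros x Hx. apply (derivable_pt_lim_comp g f); auto. apply F1; exact I.
  - apply Cn_mult; auto. Qed.

Lemma Cn_inv U n g : (forall x, U x -> g x <> 0) -> Cn U n g -> Cn U n (fun x => / g x).
Proof. revert g; induction n; intros g Hnz Hg; simpl; auto.
  pose proof (Cn_S _ _ _ Hg) as Hg0.
  destruct Hg as [g' [G1 G2]].
  exists (fun x => - g' x * (/ g x * / g x)); split.
  - intros x Hx. 
    pose proof (derivable_pt_lim_div (fct_cte 1) g x 0 (g' x) (derivable_pt_lim_const 1 x) (G1 x Hx) (Hnz x Hx)) as D.
    replace (- g' x * (/ g x * / g x)) with ((0 * g x - g' x * fct_cte 1 x) / Rsqr (g x)).
    + apply derivable_pt_lim_ext with (2 := D). intros; unfold div_fct, fct_cte; unfold Rdiv; ring.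
    + unfold fct_cte, Rsqr; field; auto.
  - apply Cn_mult; [apply Cn_opp; auto|]. apply Cn_mult; apply IHn; auto.
Qed.


Definition D (g : R -> R) (x : R) : R := epsilon (inhabits 0) (fun l => derivable_pt_lim g x l).

Lemma D_spec g x l : derivable_pt_lim g x l -> D g x = l.
Proof. intros H. unfold D. apply (uniqueness_limite g x).
  - apply (epsilon_spec (inhabits 0) (fun l => derivable_pt_lim g x l)). exists l; auto.
  - auto. Qed.

Lemma SmU_D U f : openP U -> SmU U f -> (forall x, U x -> derivable_pt_lim f x (D f x)) /\ SmU U (D f).
Proof. intros HU H. destruct (Sm_deriv _ _ HU H) as [f1 [H1 H2]]. split.
  - intros x Hx. rewrite (D_spec _ _ _ (H1 x Hx)). auto.
  - intros k. apply Cn_ext with f1; auto. intros x Hx. symmetry; apply D_spec; auto. Qed.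

Definition LS f := forall x, exists U, openP U /\ U x /\ SmU U f.

Lemma glue f : LS f -> SmU All f.
Proof. intros H n. revert f H; induction n; intros f H; simpl; auto.
  exists (D f); split.
  - intros x _. destruct (H x) as [U [HU [Ux HS]]]. apply (proj1 (SmU_D _ _ HU HS)); auto.
  - apply IHn. intros x. destruct (H x) as [U [HU [Ux HS]]]. exists U; repeat split; auto.
    apply (proj2 (SmU_D _ _ HU HS)). Qed.

Lemma smooth_SmU f : smooth f -> SmU All f.
Proof. intros [d [H0 H1]]. assert (forall k n, Cn All k (d n)).
  { induction k; intros n; simpl; auto. exists (d (S n)); split; auto. }
  replace f with (d O); [intros k; apply H|]. apply functional_extensionality; auto. Qed.

Lemma SmU_smooth f : SmU All f -> smooth f.
Proof. intros H. exists (fun n => Nat.iter n D f). 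
  assert (forall n, SmU All (Nat.iter n D f)).
  { induction n; simpl; auto. apply (proj2 (SmU_D _ _ openAll IHn)). }
  split; [intros; reflexivity|]. intros n x. simpl.
  apply (proj1 (SmU_D _ _ openAll (H0 n))). exact I. Qed.

Lemma open_int a b : openP (Defs.in_int a b).
Proof. intros x [Ha Hb].
  set (da := match a with None => 1 | Some a' => x - a' end).
  set (db := match b with None => 1 | Some b' => b' - x end).
  assert (0 < da) by (unfold da; destruct a; lra).
  assert (0 < db) by (unfold db; destruct b; lra).
  exists (Rmin da db); split; [apply Rmin_pos; auto|].
  intros y Hy. pose proof (Rmin_l da db). pose proof (Rmin_r da db).
  apply Rabs_def2 in Hy. split.
  - destruct a; auto. unfold da in *; lra.
  - destruct b; auto. unfold db in *; lra. Qed.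

Lemma smooth_on_SmU a b f : smooth_on a b f -> SmU (Defs.in_int a b) f.
Proof. intros [d Hd]. assert (forall k n, Cn (Defs.in_int a b) k (d n)).
  { induction k; intros n; simpl; auto. exists (d (S n)); split; auto. intros x Hx; apply (Hd x Hx). }
  intros k. apply Cn_ext with (d O); auto. apply open_int. intros x Hx; apply (Hd x Hx). Qed.

Definition near (s0 : R) (P : R -> Prop) := exists d, 0 < d /\ forall s, Rabs (s - s0) < d -> P s.

Lemma ball_open s0 d : openP (fun s => Rabs (s - s0) < d).
Proof. intros x Hx. exists (d - Rabs (x - s0)); split; [lra|]. intros y Hy.
  pose proof (Rabs_triang (y - x) (x - s0)). replace (y - x + (x - s0)) with (y - s0) in H by ring. lra. Qed.

Lemma near_and s0 P Q : near s0 P -> near s0 Q -> near s0 (fun s => P s /\ Q s).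
Proof. intros [d1 [H1 P1]] [d2 [H2 P2]]. exists (Rmin d1 d2); split; [apply Rmin_pos; auto|].
  intros s Hs. pose proof (Rmin_l d1 d2); pose proof (Rmin_r d1 d2). split; [apply P1|apply P2]; lra. Qed.

Lemma near_mono s0 (P Q : R -> Prop) : (forall s, P s -> Q s) -> near s0 P -> near s0 Q.
Proof. intros H [d [Hd HP]]; exists d; split; auto. Qed.

Lemma near_self s0 P : near s0 P -> P s0.
Proof. intros [d [Hd HP]]; apply HP. rewrite Rminus_diag, Rabs_R0; auto. Qed.

Lemma cont_lt h s0 c : continuity_pt h s0 -> h s0 < c -> near s0 (fun s => h s < c).
Proof. intros Hc Hlt. destruct (Hc (c - h s0)) as [a [Ha Hal]]; [lra|].
  exists a; split; auto. intros s Hs. destruct (Req_dec s s0) as [->|Hne]; auto.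
  assert (Hd := Hal s). simpl in Hd. unfold Rdist in Hd. 
  assert (Rabs (h s - h s0) < c - h s0). { apply Hd. split; [split; [exact I| auto]| auto]. }
  apply Rabs_def2 in H; lra. Qed.

Lemma cont_gt h s0 c : continuity_pt h s0 -> c < h s0 -> near s0 (fun s => c < h s).
Proof. intros Hc Hlt. destruct (Hc (h s0 - c)) as [a [Ha Hal]]; [lra|].
  exists a; split; auto. intros s Hs. destruct (Req_dec s s0) as [->|Hne]; auto.
  assert (Hd := Hal s). simpl in Hd. unfold Rdist in Hd. 
  assert (Rabs (h s - h s0) < h s0 - c). { apply Hd. split; [split; [exact I| auto]| auto]. }
  apply Rabs_def2 in H; lra. Qed.

Lemma dpl_cont f x l : derivable_pt_lim f x l -> continuity_pt f x.
Proof. intros H. apply (derivable_continuous_pt f x (exist _ l H)). Qed.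

Lemma SmU_cont U f x : SmU U f -> U x -> continuity_pt f x.
Proof. intros H Ux. destruct (H 1%nat) as [f' [H1 _]]. eapply dpl_cont; eauto. Qed.

Lemma SmU_sub U V f : (forall x, V x -> U x) -> SmU U f -> SmU V f.
Proof. intros H1 H2 n; eapply Cn_sub; eauto. Qed.

Lemma SmU_ext U f g : openP U -> (forall x, U x -> f x = g x) -> SmU U f -> SmU U g.
Proof. intros H1 H2 H3 n; eapply Cn_ext; eauto. Qed.


Inductive poly : (R -> R) -> Prop :=
| pconst c : poly (fun _ => c)
| pid : poly (fun z => z)
| padd p q : poly p -> poly q -> poly (fun z => p z + q z)
| pmul p q : poly p -> poly q -> poly (fun z => p z * q z).

Lemma poly_deriv p : poly p -> exists p', poly p' /\ forall z, derivable_pt_lim p z (p' z).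
Proof. induction 1.
  - exists (fun _ => 0); split; [constructor|]. intros; apply derivable_pt_lim_const.
  - exists (fun _ => 1); split; [constructor|]. intros; apply derivable_pt_lim_id.
  - destruct IHpoly1 as [p' [P1 P2]], IHpoly2 as [q' [Q1 Q2]].
    exists (fun z => p' z + q' z); split; [constructor; auto|].
    intros z; apply (derivable_pt_lim_plus p q z); auto.
  - destruct IHpoly1 as [p' [P1 P2]], IHpoly2 as [q' [Q1 Q2]].
    exists (fun z => p' z * q z + p z * q' z); split; [repeat constructor; auto|].
    intros z; apply (derivable_pt_lim_mult p q z); auto. Qed.

Lemma poly_bound p : poly p -> exists C k, 0 <= C /\ forall z, 1 <= z -> Rabs (p z) <= C * z ^ k.
Proof. induction 1.
  - exists (Rabs c), O; split; [apply Rabs_pos|]. intros; simpl; lra.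
  - exists 1, 1%nat; split; [lra|]. intros; simpl. rewrite Rabs_right; lra.
  - destruct IHpoly1 as [C1 [k1 [H1 P1]]], IHpoly2 as [C2 [k2 [H2 P2]]].
    exists (C1 + C2), (k1 + k2)%nat; split; [lra|]. intros z Hz.
    pose proof (Rle_pow z k1 (k1+k2) Hz ltac:(lia)). pose proof (Rle_pow z k2 (k1+k2) Hz ltac:(lia)).
    pose proof (P1 z Hz); pose proof (P2 z Hz). pose proof (Rabs_triang (p z) (q z)).
    assert (C1 * z ^ k1 <= C1 * z ^ (k1+k2)) by (apply Rmult_le_compat_l; auto).
    assert (C2 * z ^ k2 <= C2 * z ^ (k1+k2)) by (apply Rmult_le_compat_l; auto). nra.
  - destruct IHpoly1 as [C1 [k1 [H1 P1]]], IHpoly2 as [C2 [k2 [H2 P2]]].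
    exists (C1 * C2), (k1 + k2)%nat; split; [nra|]. intros z Hz.
    rewrite Rabs_mult, pow_add. pose proof (P1 z Hz); pose proof (P2 z Hz).
    replace (C1 * C2 * (z ^ k1 * z ^ k2)) with ((C1 * z^k1) * (C2 * z^k2)) by ring.
    apply Rmult_le_compat; auto; apply Rabs_pos. Qed.

Lemma exp_mulN k w : exp (INR k * w) = exp w ^ k.
Proof. induction k.
  - replace (INR 0 * w) with 0 by (simpl; ring). rewrite exp_0. simpl. ring.
  - rewrite S_INR, Rmult_plus_distr_r, Rmult_1_l, exp_plus, IHk. simpl. ring. Qed.

Lemma expbound m z : 0 < z -> z ^ m <= INR m ^ m * exp z.
Proof. intros Hz. destruct m.
  - simpl. pose proof (exp_ineq1_le z). lra.
  - set (N := INR (S m)). assert (HN : 0 < N) by (apply lt_0_INR; lia).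
    set (w := z / N). assert (Hw : z = N * w) by (unfold w; field; lra).
    assert (exp z = exp w ^ S m) by (rewrite Hw; apply exp_mulN).
    rewrite H, Hw, Rpow_mult_distr. apply Rmult_le_compat_l; [apply pow_le; lra|].
    apply pow_incr. split; [unfold w; apply Rlt_le, Rdiv_lt_0_compat; auto|].
    pose proof (exp_ineq1_le w); lra. Qed.

Definition E (p : R -> R) (y : R) : R := if Rlt_dec 0 y then p (/ y) * exp (- / y) else 0.

Lemma dinv y : y <> 0 -> derivable_pt_lim (fun y => / y) y (- (/ y * / y)).
Proof. intros Hy.
  pose proof (derivable_pt_lim_div (fct_cte 1) id y 0 1 (derivable_pt_lim_const 1 y) (derivable_pt_lim_id y) Hy) as D.
  replace (- (/ y * / y)) with ((0 * id y - 1 * fct_cte 1 y) / Rsqr (id y)).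
  - apply derivable_pt_lim_ext with (2 := D). intros; unfold div_fct, fct_cte, id, Rdiv; ring.
  - unfold id, fct_cte, Rsqr; field; auto. Qed.

Lemma E_deriv p : poly p -> exists q, poly q /\ forall y, derivable_pt_lim (E p) y (E q y).
Proof. intros Hp. destruct (poly_deriv p Hp) as [p' [Hp' Dp]].
  exists (fun z => z * z * (p z + (-1) * p' z)); split; [repeat constructor; auto|].
  intros y. destruct (Rtotal_order y 0) as [Hy|[Hy|Hy]].
  -
    unfold E at 2; destruct (Rlt_dec 0 y); [lra|].
    apply dpl_local with (fun _ => 0) (- y); [lra| |apply derivable_pt_lim_const].
    intros z Hz; unfold E; destruct (Rlt_dec 0 z); auto. apply Rabs_def2 in Hz; lra.
  - subst y. unfold E at 2; destruct (Rlt_dec 0 0); [lra|].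
    destruct (poly_bound p Hp) as [C [k [HC HB]]].
    set (K := INR (S (S k)) ^ S (S k)).
    assert (HK : 0 < K) by (apply pow_lt, lt_0_INR; lia).
    intros eps Heps.
    assert (Hd : 0 < Rmin 1 (eps / (C * K + 1))) by (apply Rmin_pos; [lra| apply Rdiv_lt_0_compat; nra]).
    exists (mkposreal _ Hd). intros h Hh0 Hh. simpl in Hh.
    pose proof (Rmin_l 1 (eps / (C * K + 1))). pose proof (Rmin_r 1 (eps / (C * K + 1))).
    rewrite Rplus_0_l. unfold E; destruct (Rlt_dec 0 0); [lra|].
    destruct (Rlt_dec 0 h) as [Hpos|Hneg].
    + set (z := / h). assert (Hz : 1 < z).
      { unfold z. rewrite Rabs_right in Hh by lra. apply (Rmult_lt_reg_l h); [lra|].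
        rewrite Rinv_r by lra. lra. }
      assert (Hhz : h = / z) by (unfold z; rewrite Rinv_inv; auto).
      replace ((p z * exp (- z) - 0) / h - 0) with (p z * z * / exp z).
      2:{ rewrite exp_Ropp, Hhz. field. repeat split; try lra; try (apply Rgt_not_eq, exp_pos). }
      pose proof (expbound (S (S k)) z ltac:(lra)) as EB. fold K in EB.
      pose proof (HB z ltac:(lra)) as PB.
      pose proof (exp_pos z) as Ez.
      rewrite Rabs_mult, Rabs_mult, (Rabs_right z) by lra.
      rewrite (Rabs_right (/ exp z)) by (apply Rle_ge, Rlt_le, Rinv_0_lt_compat; auto).
      assert (Hzk : 0 < z ^ k) by (apply pow_lt; lra).
      (* |p z| * z / exp z <= C z^(k+1) / exp z <= C K / z = C K h *)
      assert (A1 : Rabs (p z) * z * / exp z <= C * z ^ k * z * / exp z).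
      { apply Rmult_le_compat_r; [apply Rlt_le, Rinv_0_lt_compat; auto|].
        apply Rmult_le_compat_r; lra. }
      assert (A2 : z ^ k * z * / exp z <= K * h).
      { rewrite Hhz. simpl in EB. 
        apply (Rmult_le_reg_r (exp z * z)); [nra|].
        replace (z ^ k * z * / exp z * (exp z * z)) with (z * (z * z ^ k)) by (field; lra).
        replace (K * / z * (exp z * z)) with (K * exp z) by (field; lra). lra. }
      assert (A3 : C * (z ^ k * z * / exp z) <= C * (K * h)) by (apply Rmult_le_compat_l; auto).
      assert (A4 : C * K * h < eps).
      { assert (h < eps / (C * K + 1)) by (rewrite Rabs_right in Hh; lra).
        apply Rle_lt_trans with ((C * K + 1) * h); [nra|].
        apply (Rmult_lt_reg_r (/ (C * K + 1))); [apply Rinv_0_lt_compat; nra|].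
        replace ((C * K + 1) * h * / (C * K + 1)) with h by (field; nra). unfold Rdiv in H1. lra. }
      lra.
    + replace ((0 - 0) / h - 0) with 0 by (field; auto). rewrite Rabs_R0; lra.
  -
    unfold E at 2; destruct (Rlt_dec 0 y); [|lra].
    apply dpl_local with (fun y => p (/ y) * exp (- / y)) y; [lra| |].
    + intros z Hz; unfold E; destruct (Rlt_dec 0 z); auto. apply Rabs_def2 in Hz; lra.
    + assert (Hy0 : y <> 0) by lra.
      assert (D1 : derivable_pt_lim (fun y => p (/ y)) y (p' (/ y) * (- (/ y * / y)))).
      { apply (derivable_pt_lim_comp (fun y => / y) p); auto using dinv. }
      assert (D2 : derivable_pt_lim (fun y => exp (- / y)) y (exp (- / y) * (/ y * / y))).
      { replace (/ y * / y) with (- (- (/ y * / y))) by ring.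
        apply (derivable_pt_lim_comp (fun y => - / y) exp); [|apply derivable_pt_lim_exp].
        apply (derivable_pt_lim_opp (fun y => / y)); auto using dinv. }
      pose proof (derivable_pt_lim_mult _ _ _ _ _ D1 D2) as D3.
      match goal with |- derivable_pt_lim _ _ ?l => replace l with
        (p' (/ y) * - (/ y * / y) * exp (- / y) + p (/ y) * (exp (- / y) * (/ y * / y))) by ring end.
      apply derivable_pt_lim_ext with (2 := D3). intros; reflexivity. Qed.

Lemma E_Cn n p : poly p -> Cn All n (E p).
Proof. revert p; induction n; intros p Hp; simpl; auto.
  destruct (E_deriv p Hp) as [q [Hq Dq]]. exists (E q); split; auto. Qed.

Lemma E_sm p : poly p -> SmU All (E p).
Proof. intros Hp n; apply E_Cn; auto. Qed.

Definition e1 := E (fun _ => 1).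

Lemma e1_pos y : 0 < y -> 0 < e1 y.
Proof. intros; unfold e1, E; destruct (Rlt_dec 0 y); [|lra]. rewrite Rmult_1_l; apply exp_pos. Qed.
Lemma e1_zero y : y <= 0 -> e1 y = 0.
Proof. intros; unfold e1, E; destruct (Rlt_dec 0 y); [lra|auto]. Qed.
Lemma e1_nn y : 0 <= e1 y.
Proof. destruct (Rlt_dec 0 y); [apply Rlt_le, e1_pos; auto| rewrite e1_zero; lra]. Qed.

Definition sgm (y : R) : R := e1 y * / (e1 y + e1 (1 - y)).

Lemma den_pos y : 0 < e1 y + e1 (1 - y).
Proof. destruct (Rlt_dec 0 y).
  - pose proof (e1_pos y r); pose proof (e1_nn (1 - y)); lra.
  - pose proof (e1_pos (1 - y) ltac:(lra)); pose proof (e1_nn y); lra. Qed.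

Lemma sig_sm : SmU All sgm.
Proof. intros n. unfold sgm. apply Cn_mult.
  - apply E_sm; constructor.
  - apply Cn_inv. intros x _; pose proof (den_pos x); lra.
    apply Cn_plus; [apply E_sm; constructor|].
    apply Cn_comp; [apply E_sm; constructor|]. apply Cn_plus; [apply Cn_const| apply Cn_opp, Cn_id]. Qed.

Lemma sig_0 y : y <= 0 -> sgm y = 0.
Proof. intros; unfold sgm; rewrite e1_zero; auto; ring. Qed.
Lemma sig_1 y : 1 <= y -> sgm y = 1.
Proof. intros; unfold sgm. rewrite (e1_zero (1 - y)) by lra. rewrite Rplus_0_r.
  apply Rinv_r. apply Rgt_not_eq, e1_pos; lra. Qed.
Lemma sig_range y : 0 <= sgm y <= 1.
Proof. unfold sgm. pose proof (den_pos y). pose proof (e1_nn y). pose proof (e1_nn (1 - y)).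
  split. - apply Rmult_le_pos; auto. apply Rlt_le, Rinv_0_lt_compat; auto.
  - apply (Rmult_le_reg_r (e1 y + e1 (1 - y))); auto. rewrite Rmult_assoc, Rinv_l by lra. lra. Qed.



Lemma abs_le x a : Rabs x <= a -> -a <= x <= a.
Proof. unfold Rabs; destruct (Rcase_abs x); lra. Qed.

Definition ell (a y : R) : R := a/2 + (y - a/2) * sgm ((y - a/2) * / (a/2)).
Definition rho (a y : R) : R := 1 - ell a (1 - ell a y).

Lemma ell_sm a : SmU All (ell a).
Proof. intros n. unfold ell. apply Cn_plus; [apply Cn_const|]. apply Cn_mult.
  - apply Cn_plus; [apply Cn_id| apply Cn_const].
  - apply Cn_comp; [apply sig_sm|]. apply Cn_mult; [|apply Cn_const]. apply Cn_plus; [apply Cn_id| apply Cn_const]. Qed.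

Lemma rho_sm a : SmU All (rho a).
Proof. intros n. unfold rho. apply Cn_plus; [apply Cn_const|]. apply Cn_opp.
  apply Cn_comp; [apply ell_sm|]. apply Cn_plus; [apply Cn_const|]. apply Cn_opp. apply ell_sm. Qed.

Section Ell.
Variable a : R.
Hypothesis Ha : 0 < a < 1/2.

Lemma ell1 y : y <= a/2 -> ell a y = a/2.
Proof. intros; unfold ell. rewrite sig_0; [ring|]. 
  assert (0 < / (a/2)) by (apply Rinv_0_lt_compat; lra). nra. Qed.
Lemma ell2 y : a <= y -> ell a y = y.
Proof. intros; unfold ell. rewrite sig_1; [ring|].
  apply (Rmult_le_reg_r (a/2)); [lra|]. rewrite Rmult_assoc, Rinv_l by lra. lra. Qed.
Lemma ell3 y : a/2 <= ell a y.
Proof. unfold ell. pose proof (sig_range ((y - a / 2) * / (a / 2))).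
  destruct (Rle_dec y (a/2)).
  - rewrite sig_0; [lra|]. assert (0 < / (a/2)) by (apply Rinv_0_lt_compat; lra). nra.
  - nra. Qed.
Lemma ell4 y : ell a y <= Rmax y (a/2).
Proof. pose proof (Rmax_l y (a/2)); pose proof (Rmax_r y (a/2)).
  destruct (Rle_dec y (a/2)). - rewrite ell1; auto; lra.
  - unfold ell. pose proof (sig_range ((y - a / 2) * / (a / 2))). nra. Qed.

Lemma rho1 y : y <= a/2 -> rho a y = a/2.
Proof. intros; unfold rho. rewrite (ell1 y) by auto. rewrite ell2 by lra. ring. Qed.
Lemma rho2 y : 1 - a/2 <= y -> rho a y = 1 - a/2.
Proof. intros; unfold rho. rewrite (ell2 y) by lra. rewrite ell1 by lra. ring. Qed.
Lemma rho3 y : a <= y <= 1 - a -> rho a y = y.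
Proof. intros; unfold rho. rewrite (ell2 y) by lra. rewrite ell2 by lra. ring. Qed.
Lemma rho4 y : a/2 <= rho a y <= 1 - a/2.
Proof. unfold rho. pose proof (ell3 y). pose proof (ell3 (1 - ell a y)). pose proof (ell4 (1 - ell a y)).
  pose proof (Rmax_l (1 - ell a y) (a/2)); pose proof (Rmax_r (1 - ell a y) (a/2)).
  split; [|lra]. unfold Rmax in *. destruct (Rle_dec (1 - ell a y) (a/2)); lra. Qed.
Lemma rho5 y : y < a -> rho a y < a.
Proof. intros. unfold rho. pose proof (ell4 y). 
  assert (ell a y < a) by (unfold Rmax in *; destruct (Rle_dec y (a/2)); lra).
  rewrite (ell2 (1 - ell a y)) by lra. lra. Qed.
Lemma rho6 y : 1 - a < y -> 1 - a < rho a y.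
Proof. intros. unfold rho. rewrite (ell2 y) by lra. pose proof (ell4 (1 - y)).
  assert (ell a (1 - y) < a) by (unfold Rmax in *; destruct (Rle_dec (1 - y) (a/2)); lra). lra. Qed.
Lemma rho7 y : rho a y < a -> y < a.
Proof. intros. destruct (Rlt_dec y a); auto. destruct (Rle_dec y (1 - a)).
  - rewrite rho3 in H; lra. - pose proof (rho6 y ltac:(lra)); lra. Qed.
Lemma rho8 y : 1 - a < rho a y -> 1 - a < y.
Proof. intros. destruct (Rlt_dec (1 - a) y); auto. destruct (Rle_dec a y).
  - rewrite rho3 in H; lra. - pose proof (rho5 y ltac:(lra)); lra. Qed.
Lemma rho9 y : a < rho a y -> a < y.
Proof. intros. destruct (Rlt_dec a y); auto. destruct (Rlt_dec y a).
  - pose proof (rho5 y r); lra. - rewrite rho3 in H; lra. Qed.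
Lemma rho10 y : rho a y < 1 - a -> y < 1 - a.
Proof. intros. destruct (Rlt_dec y (1 - a)); auto. destruct (Rlt_dec (1 - a) y).
  - pose proof (rho6 y r); lra. - rewrite rho3 in H; lra. Qed.
End Ell.

Definition bump (s0 r s : R) : R := sgm ((s - (s0 - r)) * / (r/2)) * sgm ((s0 + r - s) * / (r/2)).

Lemma bump_sm s0 r : SmU All (bump s0 r).
Proof. intros n. unfold bump. apply Cn_mult; apply Cn_comp; try apply sig_sm; apply Cn_mult; try apply Cn_const.
  - apply Cn_plus; [apply Cn_id| apply Cn_const].
  - apply Cn_plus; [apply Cn_const| apply Cn_opp, Cn_id]. Qed.

Lemma bump1 s0 r s : 0 < r -> Rabs (s - s0) <= r/2 -> bump s0 r s = 1.
Proof. intros Hr Hs. apply abs_le in Hs. unfold bump.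
  assert (K : forall u, r/2 <= u -> 1 <= u * / (r/2)).
  { intros u Hu. apply (Rmult_le_reg_r (r/2)); [lra|]. rewrite Rmult_assoc, Rinv_l by lra. lra. }
  rewrite !sig_1; try ring; apply K; lra. Qed.

Lemma bump0 s0 r s : 0 < r -> r <= Rabs (s - s0) -> bump s0 r s = 0.
Proof. intros Hr Hs. unfold bump.
  assert (K : forall u, u <= 0 -> u * / (r/2) <= 0).
  { intros u Hu. assert (0 < / (r/2)) by (apply Rinv_0_lt_compat; lra). nra. }
  destruct (Rle_dec 0 (s - s0)).
  - rewrite Rabs_right in Hs by lra. rewrite (sig_0 ((s0 + r - s) * / (r / 2))); [ring|]. apply K; lra.
  - rewrite Rabs_left in Hs by lra. rewrite (sig_0 ((s - (s0 - r)) * / (r / 2))); [ring|]. apply K; lra. Qed.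


Lemma gen_sfun X f : gen X f -> sfun X f.
Proof. intros H c Hc; apply Hc; auto. Qed.

Lemma sm_comp f g : SmU All f -> smooth g -> smooth (fun s => f (g s)).
Proof. intros Hf Hg. apply SmU_smooth. intros n. apply Cn_comp; auto. apply smooth_SmU; auto. Qed.

Lemma sm_cont g s : smooth g -> continuity_pt g s.
Proof. intros H. apply (SmU_cont All); [apply smooth_SmU; auto| exact I]. Qed.

Lemma sfunR f : smooth f -> sfun Rspace f.
Proof. intros H c Hc. apply Hc. exact H. Qed.

Lemma sfunR' f : sfun Rspace f -> smooth f.
Proof. intros H. apply (H (fun s => s)). intros g Hg. exact Hg. Qed.

Lemma curveI (c : R -> car Ispace) : curve Ispace c -> smooth (fun s => proj1_sig (c s)).
Proof. intros Hc. apply (Hc (fun a => proj1_sig a)). simpl. exists (fun x => x). split; [|reflexivity].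
  apply sfunR, SmU_smooth. intros n; apply Cn_id. Qed.

Lemma curveI' (c : R -> car Ispace) : smooth (fun s => proj1_sig (c s)) -> curve Ispace c.
Proof. intros Hc g [f [Hf ->]]. apply sfunR' in Hf. simpl.
  apply (sm_comp f (fun s => proj1_sig (c s))); auto. apply smooth_SmU; auto. Qed.

Lemma rho_gen a : 0 < a < 1/2 -> gen Ibold (fun p : car Ibold => rho a (proj1_sig p)).
Proof. intros Ha. split.
  - intros c Hc. apply sm_comp; [apply rho_sm|]. apply curveI; auto.
  - exists (a/2); split; [lra|]. split.
    + intros x y Hx Hy. rewrite !(rho1 a Ha); lra.
    + intros x y Hx Hy. rewrite !(rho2 a Ha); lra. Qed.

Section Curve.
Variable x : R -> car Ibold.
Hypothesis Hx : curve Ibold x.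
Let Xr s := proj1_sig (x s).

Lemma rx_sm a : 0 < a < 1/2 -> smooth (fun s => rho a (Xr s)).
Proof. intros Ha. apply (Hx (fun p => rho a (proj1_sig p))). apply rho_gen; auto. Qed.

Lemma CL1 a s0 : 0 < a < 1/2 -> Xr s0 < a -> near s0 (fun s => Xr s < a).
Proof. intros Ha H. pose proof (rho5 a Ha _ H).
  apply near_mono with (fun s => rho a (Xr s) < a).
  - intros s Hs. apply (rho7 a Ha); auto.
  - apply (cont_lt (fun s => rho a (Xr s))); auto. apply sm_cont, rx_sm; auto. Qed.

Lemma CL2 a s0 : 0 < a < 1/2 -> 1 - a < Xr s0 -> near s0 (fun s => 1 - a < Xr s).
Proof. intros Ha H. pose proof (rho6 a Ha _ H).
  apply near_mono with (fun s => 1 - a < rho a (Xr s)).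
  - intros s Hs. apply (rho8 a Ha); auto.
  - apply (cont_gt (fun s => rho a (Xr s))); auto. apply sm_cont, rx_sm; auto. Qed.

Lemma CL3 a s0 : 0 < a < 1/2 -> a < Xr s0 < 1 - a ->
  near s0 (fun s => a < Xr s < 1 - a /\ Xr s = rho a (Xr s)).
Proof. intros Ha H. assert (E0 : rho a (Xr s0) = Xr s0) by (apply rho3; lra).
  apply near_mono with (fun s => a < rho a (Xr s) /\ rho a (Xr s) < 1 - a).
  - intros s [H1 H2]. pose proof (rho9 a Ha (Xr s) H1). pose proof (rho10 a Ha (Xr s) H2).
    assert (rho a (Xr s) = Xr s) by (apply rho3; lra). lra.
  - apply near_and; [apply (cont_gt (fun s => rho a (Xr s)))|apply (cont_lt (fun s => rho a (Xr s)))];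
      try (apply sm_cont, rx_sm; auto); lra. Qed.
End Curve.


Definition clamp (y : R) : R := Rmax 0 (Rmin 1 y).
Lemma clamp_rng y : 0 <= clamp y <= 1.
Proof. unfold clamp, Rmax, Rmin. destruct (Rle_dec 1 y); destruct (Rle_dec 0 _); lra. Qed.
Lemma clamp_id y : 0 <= y <= 1 -> clamp y = y.
Proof. intros; unfold clamp, Rmax, Rmin. destruct (Rle_dec 1 y); destruct (Rle_dec 0 _); lra. Qed.
Lemma clamp_lt y e : 0 < e -> y < e -> clamp y < e.
Proof. intros; unfold clamp, Rmax, Rmin. destruct (Rle_dec 1 y); destruct (Rle_dec 0 _); lra. Qed.
Lemma clamp_gt y e : e < 1 -> e < y -> e < clamp y.
Proof. intros; unfold clamp, Rmax, Rmin. destruct (Rle_dec 1 y); destruct (Rle_dec 0 _); lra. Qed.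
Lemma clamp_0 y : y <= 0 -> clamp y = 0.
Proof. intros; unfold clamp, Rmax, Rmin. destruct (Rle_dec 1 y); destruct (Rle_dec 0 _); lra. Qed.
Lemma clamp_1 y : 1 <= y -> clamp y = 1.
Proof. intros; unfold clamp, Rmax, Rmin. destruct (Rle_dec 1 y); destruct (Rle_dec 0 _); lra. Qed.

Definition mk (y : R) : car Ibold := exist (fun x => 0 <= x <= 1) (clamp y) (clamp_rng y).

Lemma sigeq (p q : car Ibold) : proj1_sig p = proj1_sig q -> p = q.
Proof. destruct p as [p Hp], q as [q Hq]; simpl; intros ->. f_equal; apply proof_irrelevance. Qed.

Lemma out_open s0 r : openP (fun s => r < Rabs (s - s0)).
Proof. intros x Hx. exists (Rabs (x - s0) - r); split; [lra|]. intros y Hy.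
  pose proof (Rabs_triang (x - y) (y - s0)). replace (x - y + (y - s0)) with (x - s0) in H by ring.
  rewrite <- Rabs_Ropp in Hy. replace (- (y - x)) with (x - y) in Hy by ring. lra. Qed.

Lemma near_open s0 U : openP U -> U s0 -> near s0 U.
Proof. intros HU H. destruct (HU s0 H) as [d [Hd Hd']]. exists d; auto. Qed.

Lemma Lgen f eps Phi : sfun Ispace f -> 0 < eps < 1/4 ->
 (forall x y : car Ispace, proj1_sig x < eps -> proj1_sig y < eps -> f x = f y) ->
 (forall x y : car Ispace, 1 - eps < proj1_sig x -> 1 - eps < proj1_sig y -> f x = f y) ->
 (forall s0, near s0 (fun s => Phi s < eps) \/ near s0 (fun s => 1 - eps < Phi s) \/
    (exists U, openP U /\ U s0 /\ SmU U Phi /\ 0 < Phi s0 < 1)) ->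
 smooth (fun s => f (mk (Phi s))).
Proof. intros Hf Heps H0 H1 HP. apply SmU_smooth, glue. intros s0.
  destruct (HP s0) as [[d [Hd N]]|[[d [Hd N]]|[U [HU [Us0 [HS HR]]]]]].
  - exists (fun s => Rabs (s - s0) < d); split; [apply ball_open|]. split; [rewrite Rminus_diag, Rabs_R0; auto|].
    apply SmU_ext with (fun _ => f (mk 0)); [apply ball_open| |intros n; apply Cn_const].
    intros s Hs. apply H0; simpl. rewrite clamp_0; lra. apply clamp_lt; [lra|]. auto.
  - exists (fun s => Rabs (s - s0) < d); split; [apply ball_open|]. split; [rewrite Rminus_diag, Rabs_R0; auto|].
    apply SmU_ext with (fun _ => f (mk 1)); [apply ball_open| |intros n; apply Cn_const].
    intros s Hs. apply H1; simpl. rewrite clamp_1; lra. apply clamp_gt; [lra|]. auto.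
  - set (b := Rmin (Phi s0) (1 - Phi s0) / 2).
    assert (Hb : 0 < b < 1/2).
    { unfold b. pose proof (Rmin_l (Phi s0) (1 - Phi s0)); pose proof (Rmin_r (Phi s0) (1 - Phi s0)).
      assert (0 < Rmin (Phi s0) (1 - Phi s0)) by (apply Rmin_pos; lra). lra. }
    assert (Hb2 : b < Phi s0 < 1 - b).
    { unfold b. pose proof (Rmin_l (Phi s0) (1 - Phi s0)); pose proof (Rmin_r (Phi s0) (1 - Phi s0)).
      assert (0 < Rmin (Phi s0) (1 - Phi s0)) by (apply Rmin_pos; lra). lra. }
    assert (Hc : continuity_pt Phi s0) by (apply (SmU_cont U); auto).
    destruct (near_and _ _ _ (near_open _ _ HU Us0)
               (near_and _ _ _ (cont_gt _ _ _ Hc (proj1 Hb2)) (cont_lt _ _ _ Hc (proj2 Hb2))))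
      as [d [Hd N]].
    set (Psi := fun s => bump s0 (d/2) s * Phi s).
    assert (HPsi : smooth Psi).
    { apply SmU_smooth, glue. intros x. destruct (Rlt_dec (Rabs (x - s0)) d) as [Hlt|Hnlt].
      - exists (fun s => Rabs (s - s0) < d); split; [apply ball_open|]. split; auto.
        intros k. unfold Psi. apply Cn_mult.
        + apply Cn_sub with All; [intros; exact I| apply bump_sm].
        + apply Cn_sub with U; [intros y Hy; apply (N y Hy)| apply HS].
      - exists (fun s => d/2 < Rabs (s - s0)); split; [apply out_open|]. split; [lra|].
        apply SmU_ext with (fun _ => 0); [apply out_open| |intros n; apply Cn_const].
        intros y Hy. unfold Psi. rewrite bump0; [ring|lra|lra]. }
    set (c := fun s => exist (fun x => 0 <= x <= 1) (rho b (Psi s))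
                 (conj (Rle_trans _ _ _ (ltac:(lra) : 0 <= b/2) (proj1 (rho4 b Hb (Psi s))))
                       (Rle_trans _ _ _ (proj2 (rho4 b Hb (Psi s))) (ltac:(lra) : 1 - b/2 <= 1))) : car Ispace).
    assert (Hcur : curve Ispace c) by (apply curveI'; simpl; apply sm_comp; auto; apply rho_sm).
    pose proof (Hf c Hcur) as Hfc.
    exists (fun s => Rabs (s - s0) < d/4); split; [apply ball_open|]. split; [rewrite Rminus_diag, Rabs_R0; lra|].
    apply SmU_ext with (fun s => f (c s)); [apply ball_open| |apply SmU_sub with All; [intros; exact I|apply smooth_SmU; auto]].
    intros s Hs. f_equal. apply sigeq. simpl. 
    destruct (N s ltac:(lra)) as [_ [N1 N2]].
    unfold Psi. rewrite bump1 by (try lra; apply Rlt_le; lra). rewrite Rmult_1_l.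
    rewrite rho3 by lra. symmetry; apply clamp_id; lra. Qed.


Definition kap (y : R) : R := sgm (3 * y - 1).
Lemma kap_sm : SmU All kap.
Proof. intros n; unfold kap. apply Cn_comp; [apply sig_sm|]. apply Cn_plus; [apply Cn_scal, Cn_id|apply Cn_const]. Qed.
Lemma kap_range y : 0 <= kap y <= 1.
Proof. apply sig_range. Qed.

Lemma open_inter U V : openP U -> openP V -> openP (fun s => U s /\ V s).
Proof. intros HU HV x [Ux Vx]. destruct (HU x Ux) as [d1 [H1 P1]], (HV x Vx) as [d2 [H2 P2]].
  exists (Rmin d1 d2); split; [apply Rmin_pos; auto|]. intros y Hy.
  pose proof (Rmin_l d1 d2); pose proof (Rmin_r d1 d2). split; [apply P1|apply P2]; lra. Qed.

Lemma ball_self s0 d : 0 < d -> Rabs (s0 - s0) < d.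
Proof. intros; rewrite Rminus_diag, Rabs_R0; auto. Qed.

Lemma kap_curve (t : R -> car Ibold) : curve Ibold t -> smooth (fun s => kap (proj1_sig (t s))).
Proof. intros Ht. apply SmU_smooth, glue. intros s0.
  destruct (Rlt_dec (proj1_sig (t s0)) (1/4)) as [L|L].
  - destruct (CL1 t Ht (1/4) s0 ltac:(lra) L) as [d [Hd N]].
    exists (fun s => Rabs (s - s0) < d); split; [apply ball_open|]. split; [apply ball_self; auto|].
    apply SmU_ext with (fun _ => 0); [apply ball_open| |intros n; apply Cn_const].
    intros s Hs. unfold kap. rewrite sig_0; auto. pose proof (N s Hs). simpl in *. lra.
  - destruct (Rlt_dec (3/4) (proj1_sig (t s0))) as [L2|L2].
    + destruct (CL2 t Ht (1/4) s0 ltac:(lra) ltac:(lra)) as [d [Hd N]].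
      exists (fun s => Rabs (s - s0) < d); split; [apply ball_open|]. split; [apply ball_self; auto|].
      apply SmU_ext with (fun _ => 1); [apply ball_open| |intros n; apply Cn_const].
      intros s Hs. unfold kap. rewrite sig_1; auto. pose proof (N s Hs). simpl in *. lra.
    + destruct (CL3 t Ht (1/8) s0 ltac:(lra) ltac:(lra)) as [d [Hd N]].
      exists (fun s => Rabs (s - s0) < d); split; [apply ball_open|]. split; [apply ball_self; auto|].
      apply SmU_ext with (fun s => kap (rho (1/8) (proj1_sig (t s)))); [apply ball_open| |].
      * intros s Hs. destruct (N s Hs) as [_ E]. rewrite <- E. reflexivity.
      * apply SmU_sub with All; [intros; exact I|]. apply smooth_SmU, sm_comp; [apply kap_sm|].
        apply rx_sm; auto; lra. Qed.

Definition Hfun (p : car (Product Ibold Ibold)) : car Ibold :=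
  mk ((1 + 3 * kap (proj1_sig (fst p))) * (proj1_sig (snd p) - 1/2) + 1/2).

Lemma H_curve (t x : R -> car Ibold) :
  curve Ibold x ->
  (forall s0 d, 0 < d -> (forall s, Rabs (s - s0) < d -> 0 < proj1_sig (x s) < 1) ->
     exists U, openP U /\ U s0 /\ SmU U (fun s => kap (proj1_sig (t s)))) ->
  curve Ibold (fun s => Hfun (t s, x s)).
Proof.
  intros Hx HT f [Hf [eps [He [H0 H1]]]]. unfold Hfun. simpl fst; simpl snd.
  apply (Lgen f eps (fun s => (1 + 3 * kap (proj1_sig (t s))) * (proj1_sig (x s) - 1/2) + 1/2)); auto.
  intros s0. 
  assert (Ha : 0 < eps/2 < 1/2) by lra.
  destruct (Rlt_dec (proj1_sig (x s0)) (eps/2)) as [L1|L1].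
  - left. destruct (CL1 _ Hx (eps/2) s0 Ha L1) as [d [Hd N]]. exists d; split; auto. intros s Hs.
    pose proof (N s Hs). pose proof (kap_range (proj1_sig (t s))). nra.
  - destruct (Rlt_dec (1 - eps/2) (proj1_sig (x s0))) as [L2|L2].
    + right; left. destruct (CL2 _ Hx (eps/2) s0 Ha L2) as [d [Hd N]]. exists d; split; auto. intros s Hs.
      pose proof (N s Hs). pose proof (kap_range (proj1_sig (t s))). nra.
    + destruct (CL3 _ Hx (eps/4) s0 ltac:(lra) ltac:(lra)) as [d [Hd N]].
      destruct (HT s0 d Hd) as [U [HU [Us0 HSU]]].
      { intros s Hs. destruct (N s Hs) as [[A1 A2] _]. lra. }
      set (V := fun s => U s /\ Rabs (s - s0) < d).
      assert (HV : openP V) by (apply open_inter; [auto| apply ball_open]).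
      assert (Vs0 : V s0) by (split; auto; apply ball_self; auto).
      assert (HS : SmU V (fun s => (1 + 3 * kap (proj1_sig (t s))) * (proj1_sig (x s) - 1/2) + 1/2)).
      { apply SmU_ext with (fun s => (1 + 3 * kap (proj1_sig (t s))) * (rho (eps/4) (proj1_sig (x s)) - 1/2) + 1/2); auto.
        - intros s [_ Hs]. destruct (N s Hs) as [_ E]. rewrite <- E. reflexivity.
        - intros n. apply Cn_plus; [|apply Cn_const]. apply Cn_mult.
          + apply Cn_plus; [apply Cn_const|]. apply Cn_scal. apply Cn_sub with U; [intros s [Us _]; auto| apply HSU].
          + apply Cn_plus; [|apply Cn_const]. apply Cn_sub with All; [intros; exact I|].
            apply smooth_SmU, rx_sm; auto; lra. }
      assert (Hc := SmU_cont _ _ _ HS Vs0).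
      destruct (Rlt_dec ((1 + 3 * kap (proj1_sig (t s0))) * (proj1_sig (x s0) - 1/2) + 1/2) eps) as [P1|P1].
      * left. apply (cont_lt _ _ _ Hc P1).
      * destruct (Rlt_dec (1 - eps) ((1 + 3 * kap (proj1_sig (t s0))) * (proj1_sig (x s0) - 1/2) + 1/2)) as [P2|P2].
        -- right; left. apply (cont_gt _ _ _ Hc P2).
        -- right; right. exists V; split; [auto| split; [auto| split; [auto| lra]]].
Qed.

Definition ufun (x : car Ibold) : car Ibold := mk (3/2 - 3 * Rabs (proj1_sig x - 1/2)).

Lemma u_curve (x : R -> car Ibold) : curve Ibold x -> curve Ibold (fun s => ufun (x s)).
Proof.
  intros Hx f [Hf [eps [He [H0 H1]]]]. unfold ufun.
  apply (Lgen f eps (fun s => 3/2 - 3 * Rabs (proj1_sig (x s) - 1/2))); auto.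
  intros s0. 
  destruct (Rlt_dec (proj1_sig (x s0)) (eps/3)) as [L1|L1].
  - left. destruct (CL1 _ Hx (eps/3) s0 ltac:(lra) L1) as [d [Hd N]]. exists d; split; auto. intros s Hs.
    pose proof (N s Hs). pose proof (proj2_sig (x s)). simpl in H2. rewrite Rabs_left1 by lra. lra.
  - destruct (Rlt_dec (1 - eps/3) (proj1_sig (x s0))) as [L2|L2].
    + left. destruct (CL2 _ Hx (eps/3) s0 ltac:(lra) L2) as [d [Hd N]]. exists d; split; auto. intros s Hs.
      pose proof (N s Hs). pose proof (proj2_sig (x s)). simpl in H2. rewrite Rabs_pos_eq by lra. lra.
    + assert (Ha : 0 < eps/6 < 1/2) by lra.
      pose proof (CL3 _ Hx (eps/6) s0 Ha ltac:(lra)) as N.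
      pose proof (rx_sm x Hx (eps/6) Ha) as HG.
      assert (Gc := sm_cont _ s0 HG).
      assert (G0 : proj1_sig (x s0) = rho (eps/6) (proj1_sig (x s0))) by (apply (near_self _ _ N)).
      destruct (Rlt_dec (1 - eps) (3/2 - 3 * Rabs (proj1_sig (x s0) - 1/2))) as [P|P].
      * right; left.
        set (eta := (3/2 - 3 * Rabs (proj1_sig (x s0) - 1/2) - (1 - eps)) / 3).
        assert (Heta : 0 < eta) by (unfold eta; lra).
        pose proof (cont_lt _ _ (rho (eps / 6) (proj1_sig (x s0)) + eta) Gc ltac:(lra)) as C1.
        pose proof (cont_gt _ _ (rho (eps / 6) (proj1_sig (x s0)) - eta) Gc ltac:(lra)) as C2.
        eapply near_mono; [| exact (near_and _ _ _ N (near_and _ _ _ C1 C2))].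
        intros s Hs. destruct Hs as [[_ E] [Q1 Q2]]. cbv beta in *. rewrite <- E in Q1, Q2. rewrite <- G0 in Q1, Q2.
        assert (T : Rabs (proj1_sig (x s) - 1/2) <= Rabs (proj1_sig (x s) - proj1_sig (x s0)) + Rabs (proj1_sig (x s0) - 1/2)).
        { replace (proj1_sig (x s) - 1/2) with ((proj1_sig (x s) - proj1_sig (x s0)) + (proj1_sig (x s0) - 1/2)) by ring. apply Rabs_triang. }
        assert (Rabs (proj1_sig (x s) - proj1_sig (x s0)) < eta) by (apply Rabs_def1; lra).
        unfold eta in *. lra.
      * right; right.
        destruct (Rlt_dec (proj1_sig (x s0)) (1/2)) as [M|M].
        -- pose proof (cont_lt _ _ (1/2) Gc ltac:(lra)) as C1.
           destruct (near_and _ _ _ N C1) as [d [Hd NN]].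
           exists (fun s => Rabs (s - s0) < d). split; [apply ball_open|]. split; [apply ball_self; auto|].
           split.
           ++ apply SmU_ext with (fun s => 3 * rho (eps/6) (proj1_sig (x s))); [apply ball_open| |].
              ** intros s Hs. destruct (NN s Hs) as [[_ E] Q]. cbv beta in *. rewrite <- E in Q |- *.
                 rewrite Rabs_left1 by lra. lra.
              ** intros n. apply Cn_scal. apply Cn_sub with All; [intros; exact I|]. apply smooth_SmU; auto.
           ++ rewrite Rabs_left1 in * by lra. lra.
        -- assert (M' : 1/2 < proj1_sig (x s0)).
           { destruct (Req_dec (proj1_sig (x s0)) (1/2)) as [Q|Q]; [|lra].
             rewrite Q in P. rewrite Rminus_diag, Rabs_R0 in P. lra. }
           pose proof (cont_gt _ _ (1/2) Gc ltac:(lra)) as C1.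
           destruct (near_and _ _ _ N C1) as [d [Hd NN]].
           exists (fun s => Rabs (s - s0) < d). split; [apply ball_open|]. split; [apply ball_self; auto|].
           split.
           ++ apply SmU_ext with (fun s => 3 + (-3) * rho (eps/6) (proj1_sig (x s))); [apply ball_open| |].
              ** intros s Hs. destruct (NN s Hs) as [[_ E] Q]. cbv beta in *. rewrite <- E in Q |- *.
                 rewrite Rabs_pos_eq by lra. lra.
              ** intros n. apply Cn_plus; [apply Cn_const|]. apply Cn_scal. apply Cn_sub with All; [intros; exact I|]. apply smooth_SmU; auto.
           ++ rewrite Rabs_pos_eq in * by lra. lra.
Qed.


Lemma kap0 : kap 0 = 0.
Proof. unfold kap. apply sig_0. lra. Qed.
Lemma kap1 : kap 1 = 1.
Proof. unfold kap. apply sig_1. lra. Qed.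

Lemma clamp_eq0 y : clamp y = 0 -> y <= 0.
Proof. unfold clamp, Rmax, Rmin. destruct (Rle_dec 1 y); destruct (Rle_dec 0 _); lra. Qed.
Lemma clamp_lt1 y : clamp y < 1 -> y < 1.
Proof. unfold clamp, Rmax, Rmin. destruct (Rle_dec 1 y); destruct (Rle_dec 0 _); lra. Qed.

Ltac nr := change (car Rspace) with R in *.

Theorem lemma3 : SNDR Ibold Ends incl.
Proof.
  split.
  { intros g Hg c Hc. apply Hg. intros f Hfgen. apply (Hc (fun a => f (proj1_sig a))). simpl.
    exists f; split; [apply gen_sfun; auto| reflexivity]. }
  exists ufun. split.
  { intros g Hg c Hc. apply Hg. apply u_curve; auto. }
  split.
  { intros x. unfold ufun, mk; simpl. pose proof (proj2_sig x) as Hx. simpl in Hx. split.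
    - intros H. apply clamp_eq0 in H. rename H into H0.
      assert (Hx01 : proj1_sig x = 0 \/ proj1_sig x = 1).
      { destruct (Rle_dec (proj1_sig x) (1/2)).
        - nr. rewrite Rabs_left1 in H0 by lra. lra.
        - nr. rewrite Rabs_pos_eq in H0 by lra. lra. }
      exists (exist _ x Hx01). reflexivity.
    - intros [[y Hy] Hyx]. unfold incl in Hyx. simpl in Hyx. subst y.
      destruct Hy as [Hy|Hy]; rewrite Hy.
      + rewrite Rabs_left1 by lra. apply clamp_0. lra.
      + rewrite Rabs_pos_eq by lra. apply clamp_0. lra. }
  exists Hfun. split.
  { intros g Hg c Hc. apply Hg.
    assert (Ht : curve Ibold (fun s => fst (c s))).
    { intros f Hf. apply (Hc (fun p => f (fst p))). left. exists f; split; [apply gen_sfun|]; auto. }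
    assert (Hx : curve Ibold (fun s => snd (c s))).
    { intros f Hf. apply (Hc (fun p => f (snd p))). right. exists f; split; [apply gen_sfun|]; auto. }
    replace (fun s => Hfun (c s)) with (fun s => Hfun (fst (c s), snd (c s))).
    2:{ apply functional_extensionality; intros s. rewrite <- surjective_pairing. reflexivity. }
    apply H_curve; auto. intros s0 d Hd _. exists All; split; [apply openAll|]. split; [exact I|].
    apply smooth_SmU, kap_curve; auto. }
  split.
  { intros h Hh t x Hx Hcond. apply Hh. apply H_curve; auto.
    intros s0 d Hd Hin.
    exists (Defs.in_int (Some (s0 - d/2)) (Some (s0 + d/2))). split; [apply open_int|].
    split; [unfold Defs.in_int; split; lra|].
    assert (HT := Hcond (d/4) ltac:(lra) (Some (s0 - d/2)) (Some (s0 + d/2))).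
    destruct HT as [dd Hdd].
    - intros s [Hs1 Hs2] s' [[a Ha] _]. simpl in Hs1, Hs2.
      assert (Hs' : d <= Rabs (s' - s0)).
      { destruct (Rle_dec d (Rabs (s' - s0))); auto.
        pose proof (Hin s' ltac:(lra)). rewrite <- Ha in H. destruct a as [y [Hy|Hy]]; unfold incl in H; simpl in H; nr; lra. }
      assert (Rabs (s' - s0) <= Rabs (s' - s) + Rabs (s - s0)).
      { replace (s' - s0) with ((s' - s) + (s - s0)) by ring. apply Rabs_triang. }
      assert (Rabs (s - s0) < d/2) by (apply Rabs_def1; lra).
      assert (Rabs (s' - s) = Rabs (s - s')) by (rewrite <- Rabs_Ropp; f_equal; ring). lra.
    - intros n. apply Cn_comp; [apply kap_sm|]. apply (smooth_on_SmU _ _ _ (ex_intro _ dd Hdd)). }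
  split.
  { intros x. apply sigeq. unfold Hfun, I0; simpl. rewrite kap0. pose proof (proj2_sig x). simpl in H.
    rewrite clamp_id; lra. }
  split.
  { intros t [y Hy]. apply sigeq. unfold Hfun, incl, mk. cbn [proj1_sig fst snd].
    pose proof (kap_range (proj1_sig t)). nr.
    destruct Hy as [Hy|Hy]; rewrite Hy.
    - apply clamp_0. nra. - apply clamp_1. nra. }
  { intros x Hu. unfold ufun, mk in Hu; simpl in Hu.
    apply clamp_lt1 in Hu. rename Hu into H.
    assert (HH : proj1_sig (Hfun (I1, x)) = 0 \/ proj1_sig (Hfun (I1, x)) = 1).
    { unfold Hfun, I1, mk. cbn [proj1_sig fst snd]. rewrite kap1. nr. destruct (Rle_dec (proj1_sig x) (1/2)).
      - nr. rewrite Rabs_left1 in H by lra. left. apply clamp_0. lra.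
      - nr. rewrite Rabs_pos_eq in H by lra. right. apply clamp_1. lra. }
    exists (exist _ (Hfun (I1, x)) HH). reflexivity. }
Qed.
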